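(* Let $q$ be an $\varepsilon$-LDP cap-based mechanism from $\mathcal{X}$ to $\mathcal{Z}$, let $\mathbf{x}\in\mathcal{X}$, let $p$ be the uniform distribution on $\mathcal{Z}$, and let $\mathbf{z}_1,\dots,\mathbf{z}_N$ be $N$ i.i.d. candidates from $p$, with $\theta$ the fraction of candidates in $\mathsf{Cap}_{\mathbf{x}}$. Let $\rho\in(0,1)$ be such that $N=\frac{2(e^\varepsilon-1)^2}{\rho^2}\ln\frac2\rho$. Then \[ \mathbb{E}_\theta\Big[D_{\mathrm{KL}}\big(\pi^{\mathrm{mrc}}_{\mathbf{x},\theta}\,\big\|\,\pi^{\mathrm{mmrc}}_{\mathbf{x},\theta}\big)\Big]\le\rho\,\log e\,(1+\varepsilon). \]
   Context: $\log$ is base 2 and KL divergence is in bits. $\varepsilon$-LDP: $q(\mathbf{z}\mid\mathbf{x})\le e^\varepsilon q(\mathbf{z}\mid\mathbf{x}')$ for all $\mathbf{x},\mathbf{x}',\mathbf{z}$. Cap-based: $q(\mathbf{z}\mid\mathbf{x})=c_1$ if $\mathbf{z}\in\mathsf{Cap}_{\mathbf{x}}$, $=c_2$ otherwise, with constants $c_1\ge c_2$ independent of $\mathbf{x},\mathbf{z}$, and $\mathsf{Cap}_{\mathbf{x}}\subseteq\mathcal{Z}$ such that $\bar\theta=\mathbb{P}_{\mathbf{z}\sim\mathrm{Unif}(\mathcal{Z})}(\mathbf{z}\in\mathsf{Cap}_{\mathbf{x}})$ is independent of $\mathbf{x}$ and $\ge c_2/(2c_1)$ (so $\mathbb{E}[\theta]=\bar\theta$).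 $\pi^{\mathrm{mrc}}_{\mathbf{x},\theta}(k)=\frac1N\frac{c_1}{\theta c_1+(1-\theta)c_2}$ if $\mathbf{z}_k\in\mathsf{Cap}_{\mathbf{x}}$ and $\frac1N\frac{c_2}{\theta c_1+(1-\theta)c_2}$ otherwise. With $t_u=\frac1N\frac{c_1}{\bar\theta c_1+(1-\bar\theta)c_2}$, $t_l=\frac1N\frac{c_2}{\bar\theta c_1+(1-\bar\theta)c_2}$: $\pi^{\mathrm{mmrc}}_{\mathbf{x},\theta}=\pi^{\mathrm{mrc}}_{\mathbf{x},\theta}$ if $\theta=\bar\theta$; if $\theta<\bar\theta$, $\pi^{\mathrm{mmrc}}(k)=t_u$ for cap candidates and $\frac{1-N\theta t_u}{N(1-\theta)}$ otherwise; if $\theta>\bar\theta$, $\pi^{\mathrm{mmrc}}(k)=t_l$ for non-cap candidates and $\frac{1-N(1-\theta)t_l}{N\theta}$ otherwise. *)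

(* Defs.v *)
From HB Require Import structures.
From mathcomp Require Import all_boot all_order all_algebra.
From mathcomp Require Import all_classical all_reals all_analysis.
Set Implicit Arguments. Unset Strict Implicit. Unset Printing Implicit Defensive.
Import Order.TTheory GRing.Theory Num.Theory.
Local Open Scope classical_set_scope.
Local Open Scope ring_scope.

Section Defs.
Variable R : realType.

Definition log2 (x : R) : R := ln x / ln 2.

Definition LDP (X Z : Type) (eps : R) (q : X -> Z -> R) : Prop :=
  forall x x' z, q x z <= expR eps * q x' z.

Definition cap_based (X Z : Type) (q : X -> Z -> R) (Cap : X -> set Z)
  (c1 c2 : R) : Prop :=
  c2 <= c1 /\ forall x z, q x z = if z \in Cap x then c1 else c2.

Definition KL (T : finType) (P Q : T -> R) : R :=
  \sum_(k : T) (if P k == 0 then 0 else P k * log2 (P k / Q k)).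

Variable N : nat.

(* A candidate pattern s : s k = true iff candidate z_k lies in Cap_x. *)
Definition pattern := {ffun 'I_N -> bool}.

Definition theta_of (s : pattern) : R := #|[pred k | s k]|%:R / N%:R.

(* law of the pattern when z_1..z_N are i.i.d. and P(z_k in Cap_x) = thbar *)
Definition pattern_prob (thbar : R) (s : pattern) : R :=
  \prod_(k < N) (if s k then thbar else 1 - thbar).

Variables (c1 c2 thbar : R).

Definition pi_mrc (s : pattern) (k : 'I_N) : R :=
  let th := theta_of s in
  N%:R^-1 * ((if s k then c1 else c2) / (th * c1 + (1 - th) * c2)).

Definition t_u : R := N%:R^-1 * (c1 / (thbar * c1 + (1 - thbar) * c2)).
Definition t_l : R := N%:R^-1 * (c2 / (thbar * c1 + (1 - thbar) * c2)).

Definition pi_mmrc (s : pattern) (k : 'I_N) : R :=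
  let th := theta_of s in
  if th == thbar then pi_mrc s k
  else if th < thbar then
    (if s k then t_u else (1 - N%:R * th * t_u) / (N%:R * (1 - th)))
  else
    (if s k then (1 - N%:R * (1 - th) * t_l) / (N%:R * th) else t_l).

Definition expected_KL : R :=
  \sum_(s : pattern) pattern_prob thbar s * KL (pi_mrc s) (pi_mmrc s).

End Defs.

(* Main.v *)
Require Import Defs.
From HB Require Import structures.
From mathcomp Require Import all_boot all_order all_algebra.
From mathcomp Require Import all_classical all_reals all_analysis.
From mathcomp Require Import ring lra.
Import Order.TTheory GRing.Theory Num.Theory.
Local Open Scope ring_scope.

Section Helpers.
Variable R : realType.
Variable N : nat.

Lemma sum_prod_pat (F : 'I_N -> bool -> R) :
  \sum_(s : pattern N) \prod_k F k (s k) = \prod_k (F k true + F k false).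
Proof.
rewrite -bigA_distr_bigA; apply: eq_bigr => i _.
by rewrite big_bool.
Qed.

Lemma prod_if1 (k : 'I_N) (f : 'I_N -> R) :
  \prod_i (if i == k then f i else 1) = f k.
Proof. by rewrite -big_mkcond big_pred1_eq. Qed.

Lemma count_sum (s : pattern N) :
  \sum_k (if s k then 1 else 0 : R) = #|[pred k | s k]|%:R.
Proof. by rewrite -big_mkcond /= sumr_const. Qed.

Definition yv (tb : R) (b : bool) : R := (if b then 1 else 0) - tb.

Lemma cross (tb : R) (k l : 'I_N) :
  \sum_(s : pattern N) pattern_prob tb s * (yv tb (s k) * yv tb (s l)) =
  if k == l then tb * (1 - tb) else 0.
Proof.
have -> : \sum_(s : pattern N) pattern_prob tb s * (yv tb (s k) * yv tb (s l)) =
  \sum_(s : pattern N) \prod_i ((if s i then tb else 1 - tb) *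
     (if i == k then yv tb (s i) else 1) * (if i == l then yv tb (s i) else 1)).
  apply: eq_bigr => s _; rewrite !big_split /= prod_if1 prod_if1 /pattern_prob.
  by rewrite mulrA.
rewrite (sum_prod_pat (fun i b => (if b then tb else 1 - tb) *
     (if i == k then yv tb b else 1) * (if i == l then yv tb b else 1))).
rewrite (bigD1 k) //= eqxx.
case: eqP => [<-|/eqP nkl].
  rewrite big1 ?mulr1; first by rewrite /yv /=; ring.
  by move=> i /negbTE ->; ring.
rewrite /yv /=.
have -> : tb * (1 - tb) * 1 + (1 - tb) * (0 - tb) * 1 = 0 by ring.
by rewrite mul0r.
Qed.

Lemma pp_sum1 (tb : R) : \sum_(s : pattern N) pattern_prob tb s = 1.
Proof.
rewrite /pattern_prob (sum_prod_pat (fun i b => if b then tb else 1 - tb)) big1 // => i _; ring.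
Qed.

Lemma pp_ge0 (tb : R) (s : pattern N) : 0 <= tb <= 1 -> 0 <= pattern_prob tb s.
Proof.
move=> /andP[h0 h1]; rewrite /pattern_prob; apply: prodr_ge0 => i _.
by case: (s i); lra.
Qed.

Lemma theta_diff (tb : R) (s : pattern N) : (0 < N)%N ->
  theta_of R s - tb = (\sum_k yv tb (s k)) / N%:R.
Proof.
move=> N0; have NZ : (N%:R : R) != 0 by rewrite pnatr_eq0 -lt0n.
rewrite /yv sumrB count_sum sumr_const card_ord /theta_of.
by field.
Qed.

Lemma variance (tb : R) : (0 < N)%N ->
  \sum_(s : pattern N) pattern_prob tb s * (theta_of R s - tb) ^+ 2
  = tb * (1 - tb) / N%:R.
Proof.
move=> N0; have NZ : (N%:R : R) != 0 by rewrite pnatr_eq0 -lt0n.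
have E (s : pattern N) : (theta_of R s - tb) ^+ 2 =
    (\sum_k \sum_l yv tb (s k) * yv tb (s l)) / N%:R ^+ 2.
  rewrite theta_diff // expr_div_n expr2 mulr_suml; congr (_ / _).
  by apply: eq_bigr => k _; rewrite mulr_sumr.
under eq_bigr => s _ do rewrite E mulrA mulr_sumr.
rewrite -mulr_suml exchange_big /=.
under eq_bigr => k _ do under eq_bigr => s _ do rewrite mulr_sumr.
under eq_bigr => k _ do rewrite exchange_big /=.
under eq_bigr => k _ do under eq_bigr => l _ do rewrite cross.
under eq_bigr => k _ do rewrite -big_mkcond /=.
have P1 (k : 'I_N) : \sum_(i < N | k == i) tb * (1 - tb) = tb * (1 - tb).
  by rewrite (big_pred1 k) // => i; rewrite /= eq_sym.
under eq_bigr => k _ do rewrite P1.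
by rewrite sumr_const card_ord; field.
Qed.

End Helpers.
Section H2.
Variable R : realType.

Lemma ln_ratio (P Q L : R) : 0 < P -> 0 < Q -> P <= (1 + L) * Q -> ln (P / Q) <= L.
Proof.
move=> P0 Q0 h.
have h1 : P / Q <= 1 + L by rewrite ler_pdivrMr.
have h2 : 0 < P / Q by apply: divr_gt0.
have -> : P / Q = 1 + (P / Q - 1) by ring.
apply: le_trans (le_ln1Dx _) _; lra.
Qed.

Lemma fracle (X Y Z W : R) : 0 < Y -> 0 < W -> X * W <= Z * Y -> X / Y <= Z / W.
Proof.
move=> Y0 W0 h; rewrite ler_pdivrMr // mulrAC ler_pdivlMr //.
Qed.

Lemma key (a b tb th M e D Db tu tl : R) (bb : bool) :
  0 < b -> b <= a -> a <= e * b -> 0 <= tb <= 1 -> b / (2 * a) <= tb ->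
  0 <= th <= 1 -> 0 < M ->
  D = th * a + (1 - th) * b -> Db = tb * a + (1 - tb) * b ->
  tu = M^-1 * (a / Db) -> tl = M^-1 * (b / Db) ->
  0 < M^-1 * ((if bb then a else b) / D) /\
  ln (M^-1 * ((if bb then a else b) / D) /
      (if th == tb then M^-1 * ((if bb then a else b) / D)
       else if th < tb then
         (if bb then tu else (1 - M * th * tu) / (M * (1 - th)))
       else
         (if bb then (1 - M * (1 - th) * tl) / (M * th) else tl)))
   <= 2 * (e - 1) * `|th - tb|.
Proof.
move=> b0 ba ae /andP[tb0 tb1] tbh /andP[th0 th1] M0 hD hDb htu htl.
have a0 : 0 < a by lra.
have e1 : a - b <= (e - 1) * b by lra.
have bD : b <= D by rewrite hD; nra.
have bDb : b <= Db by rewrite hDb; nra.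
have D0 : 0 < D by lra.
have Db0 : 0 < Db by lra.
have MD0 : 0 < M * D by apply: mulr_gt0.
have MDb0 : 0 < M * Db by apply: mulr_gt0.
have dD : Db - D = (tb - th) * (a - b) by rewrite hD hDb; ring.
have eP : M^-1 * ((if bb then a else b) / D) = (if bb then a else b) / (M * D).
  by field; apply/andP; split; apply: lt0r_neq0.
have P0 : 0 < (if bb then a else b) / (M * D) by apply: divr_gt0 => //; case: ifP => _; lra.
rewrite eP; split => //.
have L0 : 0 <= 2 * (e - 1) * `|th - tb|.
  apply: mulr_ge0 => //; nra.
case: eqP => [_|/eqP ne].
  by apply: ln_ratio => //; nra.
have tba : b <= 2 * a * tb.
  by move: tbh; rewrite ler_pdivrMr ?mulr_gt0 // mulrC.
case: ltP => hlt.
  rewrite ltr0_norm ?subr_lt0 // opprB.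
  case: bb eP P0 => eP P0.
    have -> : tu = a / (M * Db).
      by rewrite htu; field; apply/andP; split; apply: lt0r_neq0.
    apply: ln_ratio => //; first by apply: divr_gt0.
    rewrite mulrA; apply: fracle => //.
    have e0 : 0 <= e - 1 by nra.
    have h0 : a - b <= 2 * (e - 1) * D by nra.
    have h1 : Db <= (1 + 2 * (e - 1) * (tb - th)) * D.
      have : (tb - th) * (a - b) <= (tb - th) * (2 * (e - 1) * D).
        by apply: ler_wpM2l; lra.
      nra.
    have hh := ler_wpM2l (ltW (mulr_gt0 a0 M0)) h1.
    have E1 : a * (M * Db) = a * M * Db by ring.
    have E2 : (1 + 2 * (e - 1) * (tb - th)) * a * (M * D) =
      a * M * ((1 + 2 * (e - 1) * (tb - th)) * D) by ring.
    by rewrite E1 E2.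
  have hq : (1 - M * th * tu) / (M * (1 - th)) = (Db - th * a) / (M * (1 - th) * Db).
    rewrite htu; field; apply/and3P; split; try apply: lt0r_neq0 => //; lra.
  have q0 : 0 < Db - th * a by rewrite hDb; nra.
  have q1 : 0 < M * (1 - th) * Db by apply: mulr_gt0 => //; apply: mulr_gt0 => //; lra.
  rewrite hq; apply: ln_ratio => //; first by apply: divr_gt0.
  rewrite mulrA; apply: fracle => //.
  have h1 : (Db - th * a) * D - b * (1 - th) * Db = th * a * (Db - D).
    by rewrite hD; ring.
  have h3 : 0 <= th * a * (Db - D).
    by apply: mulr_ge0; [apply: mulr_ge0; lra | rewrite dD; apply: mulr_ge0; lra].
  have h2 : b * (1 - th) * Db <= (Db - th * a) * D by lra.
  have L1 : 1 <= 1 + 2 * (e - 1) * (tb - th) by nra.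
  have h4 : 0 <= (Db - th * a) * (M * D) by apply: mulr_ge0; lra.
  have hh := ler_wpM2l (ltW M0) h2.
  nra.
have gt : tb < th by rewrite lt_neqAle hlt andbT eq_sym.
rewrite gtr0_norm ?subr_gt0 //.
case: bb eP P0 => eP P0.
  have th0' : 0 < th by nra.
  have hq : (1 - M * (1 - th) * tl) / (M * th) = (tb * a + (th - tb) * b) / (M * th * Db).
    rewrite htl hDb; field; apply/and3P; split; try apply: lt0r_neq0 => //; rewrite -?hDb; lra.
  have q0 : b <= 2 * (tb * a + (th - tb) * b) by nra.
  have q1 : 0 < M * th * Db by apply: mulr_gt0 => //; apply: mulr_gt0.
  rewrite hq; apply: ln_ratio => //; first by apply: divr_gt0 => //; nra.
  rewrite mulrA; apply: fracle => //.
  have h1 : a * th * Db - (tb * a + (th - tb) * b) * D = (a - b) * b * (th - tb) * (1 - th).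
    by rewrite hD hDb; ring.
  have e0 : 0 <= e - 1 by nra.
  have h2 : (a - b) * b * (1 - th) <= 2 * (e - 1) * (tb * a + (th - tb) * b) * D.
    have k1 : (a - b) * b * (1 - th) <= (a - b) * b.
      have : 0 <= (a - b) * b * th by apply: mulr_ge0 => //; apply: mulr_ge0; lra.
      lra.
    have k2 : (a - b) * b <= (e - 1) * b * b by nra.
    have k4 : b * b <= (2 * (tb * a + (th - tb) * b)) * D.
      by apply: ler_pM; lra.
    have k3 := ler_wpM2l e0 k4.
    lra.
  have gt' : 0 <= th - tb by lra.
  have h5 := ler_wpM2r gt' h2.
  have h6 : a * th * Db <= (1 + 2 * (e - 1) * (th - tb)) * (tb * a + (th - tb) * b) * D.
    lra.
  have hh := ler_wpM2l (ltW M0) h6.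
  have E1 : a * (M * th * Db) = M * (a * th * Db) by ring.
  have E2 : (1 + 2 * (e - 1) * (th - tb)) * (tb * a + (th - tb) * b) * (M * D) =
     M * ((1 + 2 * (e - 1) * (th - tb)) * (tb * a + (th - tb) * b) * D) by ring.
  by rewrite E1 E2.
have -> : tl = b / (M * Db).
  by rewrite htl; field; apply/andP; split; apply: lt0r_neq0.
apply: ln_ratio => //; first by apply: divr_gt0.
rewrite mulrA; apply: fracle => //.
have h0 : Db <= D.
  have : 0 <= (th - tb) * (a - b) by apply: mulr_ge0; lra.
  lra.
have L1 : 1 <= 1 + 2 * (e - 1) * (th - tb) by move: L0; rewrite gtr0_norm ?subr_gt0 //; lra.
have hh := ler_wpM2l (ltW (mulr_gt0 b0 M0)) h0.
have h7 : 0 <= b * M * D by apply: mulr_ge0; [apply: mulr_ge0|]; lra.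
have E1 : b * (M * Db) = b * M * Db by ring.
have E2 : (1 + 2 * (e - 1) * (th - tb)) * b * (M * D) =
   (1 + 2 * (e - 1) * (th - tb)) * (b * M * D) by ring.
rewrite E1 E2; nra.
Qed.

End H2.

Lemma ln2_gt0 (R : realType) : 0 < ln (2 : R).
Proof. apply: ln_gt0; lra. Qed.

Lemma ell_ge (R : realType) (rho : R) : 0 < rho < 1 -> 1 / 2 <= ln (2 / rho).
Proof.
move=> /andP[r0 r1].
have -> : 2 / rho = (rho / 2)^-1 by rewrite invf_div.
rewrite lnV; last by rewrite posrE; lra.
have -> : rho / 2 = 1 + (rho / 2 - 1) by ring.
have := @le_ln1Dx R (rho / 2 - 1) ltac:(lra).
lra.
Qed.

Lemma KL_bound (R : realType) (N : nat) (c1 c2 tb e : R) (s : pattern N) :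
  (0 < N)%N -> 0 < c2 -> c2 <= c1 -> c1 <= e * c2 -> 0 <= tb <= 1 ->
  c2 / (2 * c1) <= tb ->
  KL (pi_mrc c1 c2 s) (pi_mmrc c1 c2 tb s) <=
    2 * (e - 1) * `|theta_of R s - tb| / ln 2.
Proof.
move=> N0 b0 ba ae tbr tbh.
have M0 : 0 < (N%:R : R) by rewrite ltr0n.
set th := theta_of R s.
have thr : 0 <= th <= 1.
  rewrite /th /theta_of; apply/andP; split.
    by apply: divr_ge0.
  rewrite ler_pdivrMr // mul1r ler_nat.
  by apply: leq_trans (max_card _) _; rewrite card_ord.
set L := 2 * (e - 1) * `|th - tb|.
have l2 := ln2_gt0 R.
set D := th * c1 + (1 - th) * c2.
have D0 : 0 < D by rewrite /D; case/andP: thr => ? ?; nra.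
have sumP : \sum_k pi_mrc c1 c2 s k = 1.
  rewrite /pi_mrc -mulr_sumr -mulr_suml.
  have -> : \sum_k (if s k then c1 else c2) =
      \sum_k (c2 + (c1 - c2) * (if s k then 1 else 0)).
    by apply: eq_bigr => k _; case: (s k); ring.
  rewrite big_split /= -mulr_sumr count_sum sumr_const card_ord.
  rewrite -/th -/D.
  have -> : c2 *+ N + (c1 - c2) * #|[pred k | s k]|%:R = N%:R * D.
    rewrite /D /th /theta_of -mulr_natr; field.
    by rewrite pnatr_eq0 -lt0n.
  field; apply/andP; split; apply: lt0r_neq0 => //.
apply: (@le_trans _ _ (\sum_k pi_mrc c1 c2 s k * (L / ln 2))).
  apply: ler_sum => k _.
  have [P0 hl] := @key R c1 c2 tb th N%:R e D
     (tb * c1 + (1 - tb) * c2) (t_u N c1 c2 tb) (t_l N c1 c2 tb) (s k)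
     b0 ba ae tbr tbh thr M0 erefl erefl erefl erefl.
  rewrite /pi_mrc /pi_mmrc -/th -/D.
  rewrite (negbTE (lt0r_neq0 P0)) /log2.
  apply: ler_wpM2l; first exact: ltW P0.
  apply: ler_wpM2r; first by rewrite invr_ge0 ltW.
  exact: hl.
by rewrite -mulr_suml sumP mul1r.
Qed.

Local Open Scope classical_set_scope.
Local Open Scope ring_scope.

Theorem lemma4 (R : realType) (X : Type) (d : measure_display)
  (Z : measurableType d) (p : probability Z R)
  (q : X -> Z -> R) (Cap : X -> set Z) (c1 c2 thbar eps rho : R) (N : nat)
  (x : X) :
  0 < eps ->
  LDP eps q ->
  cap_based q Cap c1 c2 ->
  (exists x1 x2 z, z \in Cap x1 /\ z \notin Cap x2) ->
  (forall x', measurable (Cap x')) ->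
  (forall x', p (Cap x') = thbar%:E) ->
  c2 / (2 * c1) <= thbar ->
  0 < rho < 1 ->
  N%:R = 2 * (expR eps - 1) ^+ 2 / rho ^+ 2 * ln (2 / rho) ->
  expected_KL N c1 c2 thbar <= rho * log2 (expR 1) * (1 + eps).
Proof.
move=> eps0 hldp [c21 hq] [x1 [x2 [z [hz1 hz2]]]] hmeas hp tbh /andP[r0 r1] hN.
set e := expR eps.
have e1 : 1 < e by rewrite /e expR_gt1.
have ae : c1 <= e * c2.
  by have := hldp x1 x2 z; rewrite !hq hz1 (negbTE hz2).
have c20 : 0 <= c2 by nra.
have tbr : 0 <= thbar <= 1.
  apply/andP; split.
    by rewrite -lee_fin -(hp x); apply: measure_ge0.
  by rewrite -lee_fin -(hp x); apply: probability_le1.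
have l2 := ln2_gt0 R.
have RHS0 : 0 <= rho * log2 (expR 1) * (1 + eps).
  rewrite /log2 expRK; apply: mulr_ge0; last lra.
  by apply: mulr_ge0; [lra | rewrite mul1r invr_ge0 ltW].
have [c2z|c2p] := eqVneq c2 0.
  have c1z : c1 = 0 by rewrite c2z mulr0 in ae; lra.
  rewrite /expected_KL big1 // => s _.
  rewrite /KL big1 ?mulr0 // => k _.
  by rewrite /pi_mrc c1z c2z if_same mul0r mulr0 eqxx.
have b0 : 0 < c2 by rewrite lt_neqAle eq_sym c2p.
case: (posnP N) => [N0|Npos].
  rewrite /expected_KL big1 // => s _.
  by rewrite /KL big1 ?mulr0 // => k; subst N; case: k.
have M0 : 0 < (N%:R : R) by rewrite ltr0n.
set e1' := e - 1.
have e10 : 0 < e1' by rewrite /e1'; lra.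
set del := rho / (2 * e1').
have del0 : 0 < del by apply: divr_gt0; lra.
apply: (@le_trans _ _ (\sum_(s : pattern N) pattern_prob thbar s *
    (e1' / ln 2 * ((theta_of R s - thbar) ^+ 2 / del + del)))).
  apply: ler_sum => s _.
  apply: ler_wpM2l; first exact: pp_ge0.
  apply: le_trans (@KL_bound R N c1 c2 thbar e s Npos b0 c21 ae tbr tbh) _.
  set y := theta_of R s - thbar.
  have -> : 2 * (e - 1) * `|y| / ln 2 = e1' / ln 2 * (2 * `|y|) by rewrite /e1'; ring.
  apply: ler_wpM2l; first by apply: divr_ge0; lra.
  have -> : y ^+ 2 = `|y| ^+ 2 by rewrite real_normK // num_real.
  have y0 : 0 <= `|y| by [].
  have h : 2 * `|y| * del <= `|y| ^+ 2 + del * del.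
    have := sqr_ge0 (`|y| - del).
    have -> : (`|y| - del) ^+ 2 = `|y| ^+ 2 + del * del - 2 * `|y| * del by ring.
    lra.
  have -> : `|y| ^+ 2 / del + del = (`|y| ^+ 2 + del * del) / del.
    by field; apply: lt0r_neq0.
  by rewrite ler_pdivlMr.
have -> : \sum_(s : pattern N) pattern_prob thbar s *
    (e1' / ln 2 * ((theta_of R s - thbar) ^+ 2 / del + del)) =
  e1' / ln 2 / del * (\sum_(s : pattern N) pattern_prob thbar s * (theta_of R s - thbar) ^+ 2)
  + e1' / ln 2 * del * (\sum_(s : pattern N) pattern_prob thbar s).
  rewrite !mulr_sumr -big_split /=; apply: eq_bigr => s _; ring.
rewrite variance // pp_sum1 mulr1.
rewrite /log2 expRK.
have ell := @ell_ge R rho ltac:(lra).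
set l := ln (2 / rho) in hN ell.
have l0 : 0 < l by lra.
have eq1 : e1' / ln 2 / del * (thbar * (1 - thbar) / N%:R) + e1' / ln 2 * del
   = (thbar * (1 - thbar) * rho / l + rho / 2) / ln 2.
  rewrite hN /del /e1' /e.
  field.
  apply/and4P; split.
  - exact: lt0r_neq0 l2.
  - exact: lt0r_neq0 l0.
  - by apply: lt0r_neq0; rewrite subr_gt0.
  - exact: lt0r_neq0 r0.
rewrite eq1 ler_pdivrMr //.
have -> : rho * (1 / ln 2) * (1 + eps) * ln 2 = rho * (1 + eps).
  by field; apply: lt0r_neq0.
have h1 : thbar * (1 - thbar) * rho / l <= rho / 2.
  rewrite ler_pdivrMr //.
  have t1 : thbar * (1 - thbar) <= 1 / 4.
    have := sqr_ge0 (2 * thbar - 1).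
    have -> : (2 * thbar - 1) ^+ 2 = 1 - 4 * (thbar * (1 - thbar)) by ring.
    lra.
  have t2 : thbar * (1 - thbar) * rho <= 1 / 4 * rho by apply: ler_wpM2r; lra.
  have t3 : 1 / 4 * rho <= rho / 2 * l.
    have -> : rho / 2 * l = rho * (l / 2) by ring.
    have -> : 1 / 4 * rho = rho * (1 / 4) by ring.
    by apply: ler_wpM2l; lra.
  lra.
have : 0 < rho * eps by apply: mulr_gt0.
lra.
Qed.
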